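(* Let $X,Y$ be real Banach spaces, $C\subseteq X$ nonempty and closed, $D\subseteq Y$ nonempty, $g:X\to Y$, and $x_0\in g^{-1}(D)\cap C$. Suppose $g$ is locally Lipschitz around $x_0$ and set $y_0:=g(x_0)$. Endow $X\times Y$ with the norm $\|(x,y)\|=\|x\|_X+\|y\|_Y$ and define $\tilde g:X\times Y\to Y$, $\tilde g(x,y)=g(x)-y$. Then the following are equivalent: (i) there exist $a>0$, $s>0$ such that $d_{g^{-1}(D)\cap C}(x)\le a\,d_D(g(x))$ for all $x\in B_X(x_0,s)\cap C$; (ii) there exist $a'>0$, $s'>0$ such that $d_{\tilde g^{-1}(0)\cap(C\times D)}(x,y)\le a'\|\tilde g(x,y)\|_Y$ for all $(x,y)\in B_{X\times Y}((x_0,y_0),s')\cap(C\times D)$.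
   Context: For a nonempty set $A$ in a normed space, $d_A(z)=\inf_{a\in A}\|z-a\|$; $B(z,r)$ denotes the closed ball of radius $r$ centred at $z$. *)

(* Defs.v *)
From HB Require Import structures.
From mathcomp Require Import all_boot all_order all_algebra.
From mathcomp Require Import all_classical all_reals all_analysis.
Set Implicit Arguments. Unset Strict Implicit. Unset Printing Implicit Defensive.
Import Order.TTheory GRing.Theory Num.Theory.
Import numFieldNormedType.Exports.
Local Open Scope classical_set_scope.
Local Open Scope ring_scope.

Definition dist_set {R : realType} {V : normedModType R} (A : set V) (z : V) : R :=
  inf [set `|z - a| | a in A].

Definition dist_set_sum {R : realType} {X Y : normedModType R}
  (S : set (X * Y)) (x : X) (y : Y) : R :=
  inf [set `|x - p.1| + `|y - p.2| | p in S].

Definition locally_lipschitz_at {R : realType} {X Y : normedModType R}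
  (g : X -> Y) (x0 : X) : Prop :=
  exists L : R, exists r : R, 0 <= L /\ 0 < r /\
    forall x x' : X, `|x - x0| <= r -> `|x' - x0| <= r ->
      `|g x - g x'| <= L * `|x - x'|.

(* Main.v *)
Require Import Defs.
From HB Require Import structures.
From mathcomp Require Import all_boot all_order all_algebra.
From mathcomp Require Import all_classical all_reals all_analysis.
From mathcomp Require Import ring lra.
Import Order.TTheory GRing.Theory Num.Theory.
Import numFieldNormedType.Exports.
Local Open Scope classical_set_scope.
Local Open Scope ring_scope.

Section Helpers.
Variable R : realType.
Variable T : Type.

Lemma img_lb (A : set T) (f : T -> R) : (forall b, 0 <= f b) ->
  has_lbound [set f b | b in A].
Proof. by move=> f0; exists 0 => _ [b _ <-]. Qed.

Lemma inf_img_le (A : set T) (f : T -> R) a : (forall b, 0 <= f b) -> A a ->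
  inf [set f b | b in A] <= f a.
Proof. by move=> f0 Aa; apply: ge_inf; [exact: img_lb| exists a]. Qed.

Lemma inf_img_approx (A : set T) (f : T -> R) e : (forall b, 0 <= f b) ->
  A !=set0 -> 0 < e -> exists2 b, A b & f b < inf [set f b | b in A] + e.
Proof.
move=> f0 [a Aa] e0.
have [_ [b Ab <-] H] := inf_adherent e0 (conj (ex_intro _ (f a) (ex_intro2 _ _ a Aa erefl)) (@img_lb A f f0)).
by exists b.
Qed.

Lemma inf_img_ge0 (A : set T) (f : T -> R) : (forall b, 0 <= f b) ->
  A !=set0 -> 0 <= inf [set f b | b in A].
Proof.
move=> f0 [a Aa]; apply: lb_le_inf; first by exists (f a), a.
by move=> _ [b _ <-].
Qed.
End Helpers.

Theorem lemma3p2 (R : realType) (X Y : completeNormedModType R)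
  (C : set X) (D : set Y) (g : X -> Y) (x0 : X) :
  C !=set0 -> closed C -> D !=set0 ->
  (g @^-1` D `&` C) x0 ->
  locally_lipschitz_at g x0 ->
  let y0 := g x0 in
  let gt := fun p : X * Y => g p.1 - p.2 in
  (exists a s : R, 0 < a /\ 0 < s /\
     forall x : X, `|x - x0| <= s -> C x ->
       dist_set (g @^-1` D `&` C) x <= a * dist_set D (g x))
  <->
  (exists a' s' : R, 0 < a' /\ 0 < s' /\
     forall (x : X) (y : Y), `|x - x0| + `|y - y0| <= s' -> C x -> D y ->
       dist_set_sum (gt @^-1` [set 0] `&` [set p | C p.1 /\ D p.2]) x y
         <= a' * `|gt (x, y)|).
Proof.
move=> _ _ D0 [Dgx0 Cx0] [L [r [L0 [r0 Lip]]]] y0 gt.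
split.
- move=> [a [s [a0 [s0 H]]]].
  set k := 2 * a * (L + 1) + 1.
  have aL : 0 <= a * (L + 1) by rewrite mulr_ge0 // ?ltW //; lra.
  have k0 : 0 < k by rewrite /k -mulrA; lra.
  exists (2 * a * (1 + L) + 1), (Num.min s (r / k)).
  split; first by rewrite (addrC 1 L) -mulrA; lra.
  split; first by rewrite lt_min s0 divr_gt0.
  move=> x y hxy Cx Dy.
  set s' := Num.min s (r / k) in hxy *.
  have s'0 : 0 <= s' by rewrite le_min (ltW s0) divr_ge0 // ltW.
  have s's : s' <= s by rewrite ge_min lexx.
  have s'r : s' * k <= r.
    have : s' <= r / k by rewrite ge_min lexx orbT.
    by rewrite ler_pdivlMr.
  have hx : `|x - x0| <= s' by have := normr_ge0 (y - y0); lra.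
  have hy : `|y - y0| <= s' by have := normr_ge0 (x - x0); lra.
  have s'r' : s' <= r by rewrite /k in s'r; nra.
  rewrite /dist_set_sum.
  have f0 : forall p : X * Y, 0 <= `|x - p.1| + `|y - p.2|.
    by move=> p; rewrite addr_ge0.
  have [gxy|gxy] := eqVneq (g x) y.
    apply: le_trans (@inf_img_le _ _ _ _ (x, y) f0 _) _.
      by rewrite /gt /= gxy subrr.
    by rewrite /= !subrr !normr0 addr0 mulr_ge0 // ?normr_ge0 //; lra.
  set n := `|gt (x, y)|.
  have n0 : 0 < n by rewrite normr_gt0 subr_eq0.
  have hx' : `|x - x0| <= r by lra.
  have x00 : `|x0 - x0| <= r by rewrite subrr normr0 ltW.
  have hn : n <= (L + 1) * s'.
    rewrite /n /gt /=.
    have h2 := ler_distD (g x0) (g x) y.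
    have h1 := Lip x x0 hx' x00.
    have h3 := ler_wpM2l L0 hx.
    rewrite (distrC (g x0)) in h2.
    change (g x0) with y0 in h2; lra.
  have ngt : n = `|g x - y| by [].
  have dD : dist_set D (g x) <= n.
    by rewrite ngt; apply: (@inf_img_le _ _ D (fun b => `|g x - b|) y (fun b => normr_ge0 _) Dy).
  have dA := H x (le_trans hx s's) Cx.
  have [x' Ax' hx'x] := @inf_img_approx _ _ (g @^-1` D `&` C) (fun b => `|x - b|) (a * n)
     (fun b => normr_ge0 _) (ex_intro _ x0 (conj Dgx0 Cx0)) (mulr_gt0 a0 n0).
  have hx2 : `|x - x'| < dist_set (g @^-1` D `&` C) x + a * n := hx'x.
  have h4 := ler_wpM2l (ltW a0) dD.
  have h5 := ler_wpM2l (ltW a0) hn.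
  have h6 := ler_distD x x' x0.
  rewrite (distrC x' x) in h6.
  have x'r : `|x' - x0| <= r.
    have : a * ((L + 1) * s') * 2 + s' = s' * k by rewrite /k; ring.
    lra.
  have h7 := Lip x x' hx' x'r.
  have h8 : L * `|x - x'| <= L * (2 * a * n).
    by apply: ler_wpM2l => //; lra.
  have h9 := ler_distD (g x) y (g x').
  rewrite (distrC y (g x)) -ngt in h9.
  have [Dx' Cx'] := Ax'.
  apply: le_trans (@inf_img_le _ _ _ _ (x', g x') f0 _) _.
    by split => //=; rewrite /gt /= subrr.
  rewrite /=.
  change (`|gt (x, y)|) with n.
  lra.
- move=> [a' [s' [a0 [s0 H]]]].
  have L4 : 0 < 4 * (L + 1) by lra.
  exists a', (Num.min r (s' / (4 * (L + 1)))).
  split; first done.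
  split; first by rewrite lt_min r0 divr_gt0.
  move=> x hx Cx.
  set s := Num.min r (s' / (4 * (L + 1))) in hx.
  have sr : s <= r by rewrite ge_min lexx.
  have ss' : s * (4 * (L + 1)) <= s'.
    have : s <= s' / (4 * (L + 1)) by rewrite ge_min lexx orbT.
    by rewrite ler_pdivlMr.
  have s0' : 0 <= s by have := normr_ge0 (x - x0); lra.
  have hx' : `|x - x0| <= r by lra.
  have x00 : `|x0 - x0| <= r by rewrite subrr normr0 ltW.
  set dD := dist_set D (g x).
  have dD0 : 0 <= dD := @inf_img_ge0 _ _ D (fun b => `|g x - b|) (fun b => normr_ge0 _) D0.
  have dDy0 : dD <= `|g x - y0| :=
    @inf_img_le _ _ D (fun b => `|g x - b|) y0 (fun b => normr_ge0 _) Dgx0.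
  have h1 := Lip x x0 hx' x00.
  have h2 := ler_wpM2l L0 hx.
  apply/ler_addgt0Pr => e e0.
  have a1 : 0 < a' + 1 by lra.
  set eta := Num.min (s' / 4) (e / (a' + 1)).
  have eta0 : 0 < eta by rewrite lt_min !divr_gt0.
  have eta1 : eta <= s' / 4 by rewrite ge_min lexx.
  have eta2 : eta * (a' + 1) <= e.
    have : eta <= e / (a' + 1) by rewrite ge_min lexx orbT.
    by rewrite ler_pdivlMr.
  have [y Dy hy] := @inf_img_approx _ _ D (fun b => `|g x - b|) eta
     (fun b => normr_ge0 _) D0 eta0.
  have hy2 : `|g x - y| < dD + eta := hy.
  have h3 := ler_distD (g x) y y0.
  rewrite (distrC y (g x)) in h3.
  have hxy : `|x - x0| + `|y - y0| <= s'.
    have : s * (4 * (L + 1)) = 4 * s + 4 * (L * s) by ring.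
    have : L * `|x - x0| <= L * s by [].
    change y0 with (g x0) in h3 |- *. lra.
  have h := H x y hxy Cx Dy.
  rewrite /gt /= in h.
  set S := (gt @^-1` [set 0] `&` [set p | C p.1 /\ D p.2]) in h.
  have f0 : forall p : X * Y, 0 <= `|x - p.1| + `|y - p.2|.
    by move=> p; rewrite addr_ge0.
  have S0 : S !=set0.
    by exists (x0, y0); split => //=; rewrite /gt /= subrr.
  have [[x' y'] [gt0 [/= Cx' Dy']] hp] := @inf_img_approx _ _ S _ eta f0 S0 eta0.
  rewrite /= in hp.
  have hp2 : `|x - x'| + `|y - y'| < dist_set_sum S x y + eta := hp.
  move: gt0; rewrite /gt /= => /eqP; rewrite subr_eq0 => /eqP gxy'.
  have hA : dist_set (g @^-1` D `&` C) x <= `|x - x'|.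
    apply: (@inf_img_le _ _ _ (fun b => `|x - b|) x' (fun b => normr_ge0 _)).
    by split => //; rewrite /preimage /= gxy'.
  have h5 := normr_ge0 (y - y').
  have h6 := ler_wpM2l (ltW a0) (ltW hy2).
  lra.
Qed.
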